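(* Let $D$ be a connected ribbon with $n$ boxes and $\alpha_1(D)=1$. If $c(D)>1/2+n/4$, then $\mathfrak r_D$ is not $p$-positive.
   Context: Boxes $(i,j)$ are indexed by row $i$ (top to bottom) and column $j$. A connected ribbon $D$ of composition $\alpha(D)=(\alpha_1(D),\dots,\alpha_\ell(D))$ has $\alpha_r(D)$ consecutive boxes in row $r$, with the leftmost box of row $r$ directly above the rightmost box of row $r+1$. A box $(i,j)$ of $D$ is a corner if $(i-1,j)\in D$ and $(i+1,j)\notin D$; $c(D)$ is the number of corners. $\mathfrak r_D=\sum_T x^{c(T)}$ over fillings $T$ of $D$ with letters of $\{1'<1<2'<2<\cdots\}$ having rows and columns weakly increasing, at most one unmarked $k$ per column and at most one marked $k'$ per row; $c(T)_i$ counts entries $i$ or $i'$. A symmetric function is $p$-positive if all its coefficients in the power sum basis are nonnegative. *)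

(* Defs.v *)
From HB Require Import structures.
From mathcomp Require Import all_boot all_order all_algebra.
Set Implicit Arguments. Unset Strict Implicit. Unset Printing Implicit Defensive.
Import Order.TTheory GRing.Theory Num.Theory.

(* A connected ribbon is given by its composition alpha = (alpha_1,...,alpha_l),
   a sequence of positive integers.  Rows are 0-indexed from the top
   (row r here = row r+1 of the paper), columns are 0-indexed from the left
   with the bottom row starting at column 0. *)

Definition is_composition (alpha : seq nat) : bool := all (fun a => 0 < a) alpha.

(* leftmost column of row i: left(last) = 0 and
   left(i) = left(i+1) + alpha_(i+1) - 1, i.e. the leftmost box of row i lies
   directly above the rightmost box of row i+1. *)
Definition lcol (alpha : seq nat) (i : nat) : nat :=
  sumn [seq a.-1 | a <- drop i.+1 alpha].

Definition inD (alpha : seq nat) (i j : nat) : bool :=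
  (i < size alpha) && (lcol alpha i <= j) && (j < lcol alpha i + nth 0 alpha i).

(* grid size large enough to contain every box of D(alpha) *)
Definition gsz (alpha : seq nat) : nat := (sumn alpha).+1.

Definition cell (alpha : seq nat) := ('I_(gsz alpha) * 'I_(gsz alpha))%type.

Definition corners (alpha : seq nat) : nat :=
  #|[pred p : cell alpha |
      [&& inD alpha p.1 p.2, 0 < (p.1 : nat), inD alpha (p.1 : nat).-1 p.2
        & ~~ inD alpha (p.1 : nat).+1 p.2]]|.

(* Letters 1' < 1 < 2' < 2 < ... are encoded by natural numbers:
   k' |-> 2(k-1) (even = marked), k |-> 2(k-1)+1 (odd = unmarked);
   the order on letters is the order on codes, and the underlying value
   k of a code a is a./2 + 1.  A filling using only letters in {1',...,N}
   is a finite function on the grid cells with values in option 'I_(2N),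
   equal to None exactly outside D. *)
Definition filling (alpha : seq nat) (N : nat) :=
  {ffun cell alpha -> option 'I_(2 * N)}.

Definition valid_filling (alpha : seq nat) (N : nat) (T : filling alpha N) : bool :=
  [forall p : cell alpha, (T p == None) == ~~ inD alpha p.1 p.2] &&
  [forall p : cell alpha, forall q : cell alpha,
     match T p, T q with
     | Some a, Some b =>
       [&&
           ((p.1 == q.1) && ((p.2 : nat) < q.2)) ==> ((a : nat) <= b),
           ((p.2 == q.2) && ((p.1 : nat) < q.1)) ==> ((a : nat) <= b),
           (* at most one unmarked k per column *)
           [&& p.2 == q.2, p != q & odd a] ==> ((a : nat) != b)
         & (* at most one marked k' per row *)
           [&& p.1 == q.1, p != q & ~~ odd a] ==> ((a : nat) != b)]
     | _, _ => true
     end].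

(* c(T)_k (0-indexed k, i.e. the letter k+1): number of entries k+1 or (k+1)' *)
Definition content_at (alpha : seq nat) (N : nat) (T : filling alpha N) (k : nat) : nat :=
  #|[pred p : cell alpha | if T p is Some a then (a : nat)./2 == k else false]|.

(* coefficient of the monomial x^mu (mu = (mu_1,...,mu_N), x_i^{mu_i}) in r_D *)
Definition rD_coef (alpha : seq nat) (mu : seq nat) : nat :=
  #|[pred T : filling alpha (size mu) | valid_filling T &&
       [forall k : 'I_(size mu), content_at T k == nth 0 mu k]]|.

(* coefficient of x^mu in the power sum p_lambda = prod_i (sum_j x_j^{lambda_i}) *)
Definition psum_coef (lambda mu : seq nat) : nat :=
  #|[pred f : {ffun 'I_(size lambda) -> 'I_(size mu)} |
      [forall j : 'I_(size mu), (\sum_(i | f i == j) nth 0 lambda i) == nth 0 mu j]]|.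

Definition is_partition (lambda : seq nat) : bool :=
  sorted geq lambda && all (fun a => 0 < a) lambda.

Definition p_positive (coef : seq nat -> nat) : Prop :=
  exists (L : seq (seq nat)) (c : seq nat -> rat),
    all is_partition L /\ (forall l, 0 <= c l)%R /\
    forall mu : seq nat,
      ((coef mu)%:R = \sum_(l <- L) c l * (psum_coef l mu)%:R)%R.

(* Main.v *)
Require Import Defs.
From HB Require Import structures.
From mathcomp Require Import all_boot all_order all_algebra zify.
Import Order.TTheory GRing.Theory Num.Theory.
Set Implicit Arguments. Unset Strict Implicit. Unset Printing Implicit Defensive.

Section Geo.
Variable alpha : seq nat.
Hypothesis Hc : is_composition alpha.
Local Notation a r := (nth 0 alpha r).
Local Notation L r := (lcol alpha r).
Local Notation l := (size alpha).

Lemma apos r : r < l -> 0 < a r.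
Proof. by move=> H; move/all_nthP: Hc; apply. Qed.

Lemma lcolS r : r.+1 < l -> L r = L r.+1 + (a r.+1).-1.
Proof. by move=> H; rewrite /lcol (drop_nth 0 H) /= addnC. Qed.

Lemma lcol_ge r : l <= r.+1 -> L r = 0.
Proof. by move=> H; rewrite /lcol drop_oversize. Qed.

Lemma lcolM r k : r + k.+1 < l -> L (r + k.+1) + a (r + k.+1) <= (L r).+1.
Proof.
elim: k => [|k IH] H.
  rewrite addn1 in H *. rewrite (lcolS (r:=r)) //. have := apos H. lia.
have H1 : r + k.+1 < l by lia.
have := IH H1. have := apos H1. have := apos H.
rewrite (lcolS (r := r + k.+1)) -?addnS; last by rewrite addnS. rewrite addnS. lia.
Qed.
End Geo.

Section Geo2.
Variable alpha : seq nat.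
Hypothesis Hc : is_composition alpha.
Local Notation a r := (nth 0 alpha r).
Local Notation L r := (lcol alpha r).
Local Notation l := (size alpha).

Lemma col_top r r' j : inD alpha r j -> inD alpha r' j -> r < r' ->
  j = L r /\ j.+1 = L r' + a r'.
Proof.
rewrite /inD => /andP[/andP[H1 H2] H3] /andP[/andP[H4 H5] H6] Hr.
have := lcolM Hc (r:=r) (k := r' - r.+1). rewrite (_ : r + (r' - r.+1).+1 = r') ?H4; last lia.
move=> /(_ isT) H. lia.
Qed.

Lemma inD_left r : r < l -> inD alpha r (L r).
Proof. move=> H; rewrite /inD H leqnn /=; have := apos Hc H; lia. Qed.

Lemma inD_right r : r < l -> inD alpha r (L r + (a r).-1).
Proof. move=> H; rewrite /inD H /=; have := apos Hc H; lia. Qed.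

Lemma inD_below r : r.+1 < l -> inD alpha r.+1 (L r).
Proof. move=> H; rewrite /inD H (lcolS H) /=; have := apos Hc H; lia. Qed.

Lemma sumn_pred s : sumn [seq x.-1 | x <- s] <= sumn s.
Proof. elim: s => //= x s IH; lia. Qed.

Lemma sumn_drop k s : sumn (drop k s) <= sumn s.
Proof. by rewrite -{2}(cat_take_drop k s) sumn_cat leq_addl. Qed.

Lemma width r : r < l -> L r + a r <= sumn alpha.
Proof.
move=> H. have E := drop_nth 0 H. have := sumn_drop r alpha. rewrite E /=.
have := sumn_pred (drop r.+1 alpha). rewrite /lcol. lia.
Qed.

Lemma size_sumn : l <= sumn alpha.
Proof. move: Hc; rewrite /is_composition; elim: alpha => //= x s IH /andP[H1 H2]. have := IH H2. lia. Qed.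

Lemma inD_grid r j : inD alpha r j -> r < gsz alpha /\ j < gsz alpha.
Proof.
rewrite /inD /gsz => /andP[/andP[H1 H2] H3]. have := width H1. have := size_sumn. lia.
Qed.
End Geo2.

Section Valid.
Variable alpha : seq nat.
Variable N : nat.
Implicit Types (T : filling alpha N) (p q : cell alpha).

Lemma vnone T p : valid_filling T -> (T p == None) = ~~ inD alpha p.1 p.2.
Proof. by case/andP=> /forallP/(_ p)/eqP. Qed.

Lemma vpair T p q a b : valid_filling T -> T p = Some a -> T q = Some b ->
 [&& ((p.1 == q.1) && ((p.2 : nat) < q.2)) ==> ((a : nat) <= b),
     ((p.2 == q.2) && ((p.1 : nat) < q.1)) ==> ((a : nat) <= b),
     [&& p.2 == q.2, p != q & odd a] ==> ((a : nat) != b)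
   & [&& p.1 == q.1, p != q & ~~ odd a] ==> ((a : nat) != b)].
Proof. by case/andP=> _ /forallP/(_ p)/forallP/(_ q); move=> + Ep Eq; rewrite Ep Eq. Qed.

Lemma vsome T p : valid_filling T -> inD alpha p.1 p.2 -> exists a, T p = Some a.
Proof.
move=> V H; have := vnone p V; rewrite H; case: (T p) => [x|] //= _; by exists x.
Qed.
End Valid.

Definition mkcell alpha (i j : nat) : cell alpha := (inord i, inord j).

Lemma mkcellK1 alpha i j : i < gsz alpha -> ((mkcell alpha i j).1 : nat) = i.
Proof. by move=> H; rewrite /= inordK. Qed.
Lemma mkcellK2 alpha i j : j < gsz alpha -> ((mkcell alpha i j).2 : nat) = j.
Proof. by move=> H; rewrite /= inordK. Qed.
Lemma cell_eq alpha (p q : cell alpha) : (p.1 : nat) = q.1 -> (p.2 : nat) = q.2 -> p = q.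
Proof. by case: p q => [x y] [u v] /= /val_inj -> /val_inj ->. Qed.

Section Upper.
Variable alpha : seq nat.
Hypothesis Hc : is_composition alpha.
Local Notation a r := (nth 0 alpha r).
Local Notation L r := (lcol alpha r).
Local Notation l := (size alpha).
Implicit Types (T : filling alpha 1) (p q : cell alpha).

Lemma one_right T p x : valid_filling T -> inD alpha p.1 p.2 -> L p.1 < p.2 ->
  T p = Some x -> (x : nat) = 1.
Proof.
move=> V Hp Hlt E.
have Hl : p.1 < l by move: Hp; rewrite /inD => /andP[/andP[]].
have H0 := inD_left Hc Hl. have [g1 g2] := inD_grid Hc H0.
set p0 := mkcell alpha p.1 (L p.1).
have Hp0 : inD alpha p0.1 p0.2 by rewrite mkcellK1 // mkcellK2.
have [y Ey] := vsome V Hp0.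
have e1 : p0.1 = p.1 by apply: val_inj; rewrite /p0 /= inordK.
have e2 : (p0.2 : nat) = L p.1 by rewrite mkcellK2.
have := vpair V Ey E. rewrite e1 e2 eqxx Hlt /=.
have Hne : p0 != p. apply/negP => /eqP Ee. by move: Hlt; rewrite -Ee e1 e2 ltnn.
rewrite Hne /=. have := ltn_ord x. have := ltn_ord y.
case: (nat_of_ord x) => [|[|k]] //; case: (nat_of_ord y) => [|[|k']] //.
by move=> _ _ /and4P[_ _ _].
Qed.

Lemma one_left T p x : valid_filling T -> (p.2 : nat) = L p.1 -> (p.1).+1 < l ->
  T p = Some x -> (x : nat) = 0.
Proof.
move=> V Hj Hl E.
have H0 := inD_below Hc Hl. have [g1 g2] := inD_grid Hc H0.
set q := mkcell alpha (p.1).+1 (L p.1).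
have Hq : inD alpha q.1 q.2 by rewrite mkcellK1 // mkcellK2.
have [y Ey] := vsome V Hq.
have e1 : (q.1 : nat) = (p.1).+1 by rewrite mkcellK1.
have e2 : q.2 = p.2 by apply: val_inj; rewrite /q /= inordK // Hj.
have := vpair V E Ey. rewrite e1 e2 eqxx leqnn /=.
have Hne : p != q. apply/negP => /eqP Ee. move: e1; rewrite -Ee; lia.
rewrite Hne /=. have := ltn_ord x. have := ltn_ord y.
case: (nat_of_ord x) => [|[|k]] //; case: (nat_of_ord y) => [|[|k']] //.
all: by move=> _ _ /and4P[].
Qed.

Lemma two_vals (x y : 'I_(2 * 1)) : odd x = odd y -> x = y.
Proof.
move=> H; apply: val_inj => /=. move: H (ltn_ord x) (ltn_ord y).
by case: (nat_of_ord x) => [|[|?]] //; case: (nat_of_ord y) => [|[|?]].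
Qed.

Lemma upper m : 0 < l -> rD_coef alpha [:: m] <= 2.
Proof.
move=> Hl. rewrite /rD_coef.
pose q0 := mkcell alpha l.-1 0.
pose f := fun T : filling alpha 1 => if T q0 is Some x then odd x else false.
apply: leq_trans (@leq_card_in _ _ f _ _) _; last by rewrite card_bool.
move=> T T' /andP[V _] /andP[V' _] Ef. apply/ffunP => p.
case Hp: (inD alpha p.1 p.2); last first.
  by have := vnone p V; have := vnone p V'; rewrite Hp => /eqP -> /eqP ->.
have [x Ex] := vsome V Hp. have [x' Ex'] := vsome V' Hp.
rewrite Ex Ex'; congr Some.
have Hpl : p.1 < l by move: Hp; rewrite /inD => /andP[/andP[]].
have Hge : L p.1 <= p.2 by move: Hp; rewrite /inD => /andP[/andP[]].
case: (ltnP (L p.1) p.2) => H1.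
  by apply: val_inj; rewrite /= (one_right V Hp H1 Ex) (one_right V' Hp H1 Ex').
have H2 : (p.2 : nat) = L p.1 by lia.
case: (ltnP (p.1).+1 l) => H3.
  by apply: val_inj; rewrite /= (one_left V H2 H3 Ex) (one_left V' H2 H3 Ex').
have [g1 g2] := inD_grid Hc Hp.
have E4 : L p.1 = 0 by apply: lcol_ge.
have Ep : p = q0.
  have sl := size_sumn Hc.
  have El : l = (p.1).+1 by apply/eqP; rewrite eqn_leq H3 Hpl.
  apply: cell_eq; rewrite /q0 /= !inordK //; rewrite ?H2 ?E4 ?El //.
  have Eo : odd x = odd x' by move: Ef; rewrite /f -Ep Ex Ex'.
exact: (@two_vals x x' Eo).
Qed.
End Upper.

Lemma sumn_big s : sumn s = \sum_(i < size s) nth 0 s i.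
Proof. by rewrite sumnE (big_nth 0) big_mkord. Qed.

Section Psum.
Variable lam : seq nat.
Hypothesis Hp : is_partition lam.
Local Notation s := (size lam).

Lemma lpos (i : 'I_s) : 0 < nth 0 lam i.
Proof. case/andP: Hp => _ /all_nthP; apply; exact: ltn_ord. Qed.

Section F.
Variable n : nat.
Variable f : {ffun 'I_s -> 'I_(size [:: n.-1; 1])}.
Hypothesis Hf : [forall j : 'I_(size [:: n.-1; 1]),
    (\sum_(i | f i == j) nth 0 lam i) == nth 0 [:: n.-1; 1] j].
Let j0 : 'I_(size [:: n.-1; 1]) := ord0.
Let j1 : 'I_(size [:: n.-1; 1]) := @Ordinal 2 1 isT.

Lemma f0 : \sum_(i | f i == j0) nth 0 lam i = n.-1.
Proof. by move/forallP: Hf => /(_ j0)/eqP. Qed.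
Lemma f1 : \sum_(i | f i == j1) nth 0 lam i = 1.
Proof. by move/forallP: Hf => /(_ j1)/eqP. Qed.

Lemma fsum : \sum_(i < s) nth 0 lam i = n.-1 + 1.
Proof.
rewrite (bigID (fun i => f i == j0)) /= f0; congr (_ + _); apply: etrans _ f1; apply: eq_bigl => i.
rewrite -(inj_eq val_inj) /=. case: (f i) => [[|[|k]] Hk] //=.
Qed.

Lemma funiq i k : f i == j1 -> f k == j1 -> i = k.
Proof.
move=> Hi Hk; apply/eqP/negPn/negP => Hne.
have := f1. rewrite (bigD1 i) //= (bigD1 k) /=; last by rewrite Hk eq_sym Hne.
have := lpos i; have := lpos k. lia.
Qed.
End F.

Lemma valid_pick n (f : {ffun 'I_s -> 'I_(size [:: n.-1; 1])}) :
  [forall j : 'I_(size [:: n.-1; 1]),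
    (\sum_(i | f i == j) nth 0 lam i) == nth 0 [:: n.-1; 1] j] ->
  exists k, [pick i | f i == @Ordinal 2 1 isT] = Some k /\ f k == @Ordinal 2 1 isT.
Proof.
move=> Hf. case: pickP => [k Hk|H0]; first by exists k.
have := f1 Hf. rewrite big_pred0 //.
Qed.

Lemma two_cases m (x : 'I_(size [:: m; 1])) : x != @Ordinal 2 1 isT -> x = ord0.
Proof. by case: x => [[|[|k]] Hk] //= _; apply: val_inj. Qed.

Lemma psum_bound n : 0 < n -> psum_coef lam [:: n.-1; 1] <= n * psum_coef lam [:: n].
Proof.
move=> Hn. case E: (psum_coef lam [:: n.-1; 1]) => [|k] //.
have /card_gt0P [f0 Hf0] : 0 < psum_coef lam [:: n.-1; 1] by rewrite E.
move: Hf0; rewrite unfold_in /= => Hf0.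
have Hs : sumn lam = n by rewrite sumn_big (fsum Hf0); lia.
have [i0 [_ _]] := valid_pick Hf0.
have H1 : 0 < psum_coef lam [:: n].
  apply/card_gt0P; exists [ffun=> ord0]; rewrite unfold_in /=.
  apply/forallP => j; rewrite (ord1 j) /=.
  rewrite (eq_bigl xpredT); last by move=> i; rewrite ffunE.
  by rewrite -sumn_big Hs.
apply: leq_trans (leq_pmulr _ H1). rewrite -E.
have Hsn : s <= n by rewrite -Hs; apply: size_sumn; by case/andP: Hp.
apply: leq_trans Hsn. rewrite -[X in _ <= X](card_ord s).
apply: (@leq_card_in _ _ (fun f : {ffun 'I_s -> 'I_(size [:: n.-1; 1])} =>
   odflt i0 [pick i | f i == @Ordinal 2 1 isT])).
move=> f f'; rewrite !unfold_in /= => Hf Hf'.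
have [k1 [Ek Hk]] := valid_pick Hf. have [k2 [Ek' Hk']] := valid_pick Hf'.
rewrite Ek Ek' /= => Ekk. subst k2.
apply/ffunP => i.
case: (boolP (f i == @Ordinal 2 1 isT)) => Hi.
  by rewrite (funiq Hf Hi Hk) (eqP Hk) (eqP Hk').
case: (boolP (f' i == @Ordinal 2 1 isT)) => Hi'.
  by move: Hi; rewrite (funiq Hf' Hi' Hk') Hk.
by rewrite (two_cases Hi) (two_cases Hi').
Qed.
End Psum.

Lemma interval_sum g m k : m + k <= g ->
  \sum_(j < g) ((m <= j) && (j < m + k) : nat) = k.
Proof.
move=> H. rewrite -(big_mkord xpredT (fun j => ((m <= j) && (j < m + k) : nat))).
rewrite (big_cat_nat _ (n:=m)) //=; last lia.
rewrite (big_cat_nat _ (n:=m+k) (m := m)) //=; last lia.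
rewrite (eq_big_nat _ _ (F2 := fun=> 0)); last by move=> j /andP[_ Hj]; rewrite leqNgt Hj.
rewrite (eq_big_nat _ _ (m := m) (F2 := fun=> 1)); last by move=> j /andP[-> ->].
rewrite (eq_big_nat _ _ (m := m + k) (F2 := fun=> 0)); last first.
  by move=> j /andP[Hj _]; rewrite ltnNge Hj andbF.
rewrite !sum_nat_const_nat. lia.
Qed.

Lemma cardD_eq alpha : is_composition alpha ->
  #|[pred p : cell alpha | inD alpha p.1 p.2]| = sumn alpha.
Proof.
move=> Hc.
transitivity (\sum_(r < gsz alpha) \sum_(j < gsz alpha) (inD alpha r j : nat)).
  rewrite pair_big /= -sum1_card big_mkcond /=. apply: eq_big => // p.
rewrite (eq_bigr (fun r : 'I_(gsz alpha) => if (r : nat) < size alpha then nth 0 alpha r else 0)); last first.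
  move=> r _. case: ifP => Hr.
    have := width Hc Hr. rewrite /inD Hr /= => Hw.
    by apply: interval_sum; apply: (leq_trans Hw); apply: leqnSn.
  by apply: big1 => j _; rewrite /inD Hr.
have sl := size_sumn Hc.
rewrite -(big_mkord xpredT (fun r => if r < size alpha then nth 0 alpha r else 0)).
rewrite (big_cat_nat _ (n := size alpha)) //=; last by rewrite /gsz; lia.
rewrite (eq_big_nat _ _ (m := size alpha) (F2 := fun=> 0)); last first.
  by move=> j /andP[Hj _]; rewrite ltnNge Hj.
rewrite (eq_big_nat _ _ (m := 0) (F2 := fun r => nth 0 alpha r)); last first.
  by move=> j /andP[_ ->].
by rewrite sum_nat_const_nat muln0 addn0 big_mkord -sumn_big.
Qed.

Definition bcol alpha i := lcol alpha i + (nth 0 alpha i).-1.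
Definition good alpha i :=
  [&& 0 < i, i < size alpha & (1 < nth 0 alpha i) || (i.+1 == size alpha)].
Definition codeN alpha i (s x y : bool) (r j : nat) : nat :=
  if (r == i) && (j == bcol alpha i) then (2 + s)
  else if lcol alpha r < j then 1
  else if r.+1 == i then nat_of_bool x
  else if r.+1 == size alpha then nat_of_bool y else 0.

Section Code.
Variable alpha : seq nat.
Hypothesis Hc : is_composition alpha.
Variables (i : nat) (s x y : bool).
Hypothesis Hg : good alpha i.
Local Notation a r := (nth 0 alpha r).
Local Notation L r := (lcol alpha r).
Local Notation l := (size alpha).
Local Notation v := (codeN alpha i s x y).

Lemma code_le r j : v r j <= 3.
Proof. by rewrite /codeN; case: s; case: x; case: y; repeat case: ifP. Qed.

Lemma code_ge2 r j : (2 <= v r j) = (r == i) && (j == bcol alpha i).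
Proof. by rewrite /codeN; case: s; case: x; case: y; case: ifP => H; rewrite ?H; repeat case: ifP. Qed.

Lemma code_le1 r j : ~~ ((r == i) && (j == bcol alpha i)) -> v r j <= 1.
Proof. by move=> H; rewrite leqNgt code_ge2 (negbTE H). Qed.

Lemma code_right r j : inD alpha r j -> L r < j -> ~~ ((r == i) && (j == bcol alpha i)) -> v r j = 1.
Proof. by move=> _ H1 H2; rewrite /codeN (negbTE H2) H1. Qed.

Lemma code_zero r j : inD alpha r j -> v r j = 0 -> (j = L r) /\ ~~ ((r == i) && (j == bcol alpha i)).
Proof.
move=> H; rewrite /codeN; case: ifP => Hb //. case: ifP => Hl //.
move: H; rewrite /inD => /andP[/andP[_ H] _] _; split => //. lia.
Qed.

Lemma igood : [/\ 0 < i, i < l & (1 < a i) || (i.+1 == l)].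
Proof. by case/and3P: Hg. Qed.

Lemma code_col r r' j : inD alpha r j -> inD alpha r' j -> r < r' ->
  v r j = 0 \/ (r' = i /\ j = bcol alpha i).
Proof.
move=> H1 H2 Hr. have [Ej Ej'] := col_top Hc H1 H2 Hr.
have [i0 il ia] := igood.
have Hl' : r' < l by move: H2; rewrite /inD => /andP[/andP[]].
have notb : ~~ ((r == i) && (j == bcol alpha i)).
  apply/negP => /andP[/eqP Er /eqP Eb]. subst r.
  move: Eb; rewrite Ej /bcol. have := apos Hc il. move: ia.
  case/orP => [Ha|/eqP Hi]; lia.
rewrite /codeN (negbTE notb) Ej ltnn.
case: ifP => [/eqP Hri|_]; last by case: ifP => [/eqP Hq|_]; [exfalso; lia | left].
right.
have Eb : j = bcol alpha i by rewrite Ej /bcol -Hri (lcolS (r:=r)) // Hri.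
case: (ltngtP r' i) => Hc'; [exfalso; lia | idtac | by split; rewrite // -Ej].
exfalso. have Hbi := inD_right Hc il.
have H2' : inD alpha r' (bcol alpha i) by rewrite -Eb.
have [Ej2 _] := col_top Hc Hbi H2' Hc'.
move: Ej2; rewrite /bcol. have := apos Hc il. move: ia. case/orP => [Ha|/eqP Hi]; lia.
Qed.
End Code.

Definition Fill alpha m i (s x y : bool) : filling alpha (size [:: m; 1]) :=
  [ffun p : cell alpha => if inD alpha p.1 p.2 then
      Some (@inord 3 (codeN alpha i s x y p.1 p.2)) else None].

Section FillV.
Variable alpha : seq nat.
Hypothesis Hc : is_composition alpha.
Variables (m i : nat) (s x y : bool).
Hypothesis Hg : good alpha i.
Local Notation v := (codeN alpha i s x y).

Lemma Fill_valid : valid_filling (Fill alpha m i s x y).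
Proof.
apply/andP; split.
  by apply/forallP => p; rewrite ffunE; case: inD.
apply/forallP => p; apply/forallP => q; rewrite !ffunE.
case Hp: (inD alpha p.1 p.2) => //; case Hq: (inD alpha q.1 q.2) => //.
rewrite !inordK ?ltnS ?code_le //.
have pq1 : (p.1 == q.1) = (p.1 == q.1 :> nat) by [].
have pq2 : (p.2 == q.2) = (p.2 == q.2 :> nat) by [].
have pqne : (p != q) -> ((p.1 : nat) != q.1) || ((p.2 : nat) != q.2).
  move=> H; rewrite -negb_and; apply/negP => /andP[/eqP E1 /eqP E2]; move/negP: H; apply.
  by apply/eqP; apply: cell_eq.
move: Hp Hq pqne; rewrite pq1 pq2; clear pq1 pq2; move: (p != q) => pq.
case: p => [r j]; case: q => [r' j'] /=.
move: (nat_of_ord r) (nat_of_ord j) (nat_of_ord r') (nat_of_ord j') => {r j r' j'} r j r' j' Hp Hq pqne.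
apply/and4P; split; apply/implyP.
-
  case/andP => /eqP Er Hj. subst r'.
  have nb : ~~ ((r == i) && (j == bcol alpha i)).
    apply/negP => /andP[/eqP Ei /eqP Eb]. subst r. move: Hq Hj; rewrite /inD Eb /bcol.
    move=> /andP[/andP[_ _]] H Hj. lia.
  have := code_le1 s x y nb.
  case E: ((r == i) && (j' == bcol alpha i)).
    have : 2 <= v r j' by rewrite code_ge2 E.
    lia.
  have Hl : lcol alpha r < j' by move: Hp; rewrite /inD => /andP[/andP[_ H] _]; lia.
  by rewrite (code_right s x y Hq Hl) ?E.
-
  case/andP => /eqP Ej Hr. subst j'.
  case: (code_col Hc s x y Hg Hp Hq Hr) => [->|[Er Eb]] //.
  have nb : ~~ ((r == i) && (j == bcol alpha i)) by rewrite -Er; case: eqP => //; lia.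
  have := code_le1 s x y nb.
  have : 2 <= v r' j by rewrite code_ge2 Er Eb !eqxx.
  lia.
-
  case/and3P => /eqP Ej Hne Hodd. subst j'.
  apply/negP => /eqP Evv.
  have Hrr : r != r' by move: (pqne Hne); rewrite eqxx orbF.
  case: (ltngtP r r') Hrr => // Hr _.
    case: (code_col Hc s x y Hg Hp Hq Hr) => [E0|[Er Eb]]; first by rewrite E0 in Hodd.
    have : 2 <= v r j by rewrite Evv code_ge2 Er Eb !eqxx.
    rewrite code_ge2 => /andP[/eqP E1 _]. lia.
  case: (code_col Hc s x y Hg Hq Hp Hr) => [E0|[Er Eb]]; first by rewrite Evv E0 in Hodd.
  have : 2 <= v r' j by rewrite -Evv code_ge2 Er Eb !eqxx.
  rewrite code_ge2 => /andP[/eqP E1 _]. lia.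
-
  case/and3P => /eqP Er Hne Hev. subst r'.
  apply/negP => /eqP Evv.
  have Hjj : j != j' by move: (pqne Hne); rewrite eqxx.
  case: (leqP 2 (v r j)) => H2.
    have H3 := H2; rewrite Evv in H3; rewrite code_ge2 in H2; rewrite code_ge2 in H3.
    case/andP: H2 => _ /eqP E1; case/andP: H3 => _ /eqP E2.
    by move: Hjj; rewrite E1 E2 eqxx.
  have E0 : v r j = 0 by move: Hev H2; case: (v r j) => [|[|k]].
  have [E1 _] := code_zero Hc Hg Hp E0.
  have [E2 _] := code_zero Hc Hg Hq (etrans (esym Evv) E0).
  by move: Hjj; rewrite E1 E2 eqxx.
Qed.
End FillV.

Section FillC.
Variable alpha : seq nat.
Hypothesis Hc : is_composition alpha.
Variables (i : nat) (s x y : bool).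
Hypothesis Hg : good alpha i.
Local Notation v := (codeN alpha i s x y).
Local Notation n := (sumn alpha).

Definition bb := mkcell alpha i (bcol alpha i).

Lemma bb_in : inD alpha i (bcol alpha i).
Proof. by apply: inD_right => //; case/and3P: Hg. Qed.

Lemma bb_grid : i < gsz alpha /\ bcol alpha i < gsz alpha.
Proof. have H := bb_in. exact: (inD_grid Hc H). Qed.

Lemma is_bb (p : cell alpha) : ((p.1 : nat) == i) && ((p.2 : nat) == bcol alpha i) = (p == bb).
Proof.
have [g1 g2] := bb_grid.
apply/idP/eqP => [/andP[/eqP E1 /eqP E2]|->]; last by rewrite /bb /= !inordK // !eqxx.
by apply: cell_eq; rewrite /bb /= !inordK.
Qed.

Lemma Fill_content m : [forall k : 'I_(size [:: m; 1]),
   content_at (Fill alpha m i s x y) k == nth 0 [:: n.-1; 1] k].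
Proof.
apply/forallP => -[[|[|k]] Hk] //=; apply/eqP; rewrite /content_at.
- have Hb : bb \in [pred p : cell alpha | inD alpha p.1 p.2].
    by rewrite unfold_in /= !inordK ?bb_in //; case: bb_grid.
  have := cardD1 bb [pred p : cell alpha | inD alpha p.1 p.2].
  rewrite Hb cardD_eq // /= => E.
  have -> : n.-1 = #|[predD1 [pred p : cell alpha | inD alpha p.1 p.2] & bb]|. by rewrite E.
  apply: eq_card => p; rewrite !unfold_in /= ffunE.
  case Hp: (inD alpha p.1 p.2); last by rewrite andbF.
  rewrite andbT inordK ?ltnS ?code_le // -is_bb -(@code_ge2 alpha i s x y).
  by case: (v p.1 p.2) => [|[|k]].
- apply: (@eq_card1 _ bb) => p; rewrite unfold_in /= ffunE.
  case Hp: (inD alpha p.1 p.2); last first.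
    by apply/esym/negbTE; apply/negP => /eqP E; move: Hp; rewrite E /= !inordK ?bb_in //; case: bb_grid.
  rewrite inordK ?ltnS ?code_le // inE -is_bb -(@code_ge2 alpha i s x y).
  have := @code_le alpha i s x y p.1 p.2.
  by case: (v p.1 p.2) => [|[|[|[|k]]]].
Qed.
End FillC.

Section Corners.
Variable alpha : seq nat.
Hypothesis Hc : is_composition alpha.
Local Notation a r := (nth 0 alpha r).
Local Notation L r := (lcol alpha r).
Local Notation l := (size alpha).

Definition CR := [set r : 'I_(gsz alpha) | good alpha r].
Definition IR := [set r : 'I_(gsz alpha) | good alpha r && (r.+1 < l)].

Lemma corner_col r j : inD alpha r j -> 0 < r -> inD alpha r.-1 j -> j = bcol alpha r.
Proof.
move=> H1 H0 H2.
have Hl : r < l by move: H1; rewrite /inD => /andP[/andP[]].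
have E := lcolS (alpha := alpha) (r := r.-1). rewrite prednK // in E.
have := E Hl. move: H1 H2; rewrite /inD /bcol => /andP[/andP[_ A1] A2] /andP[/andP[_ A3] _].
have := apos Hc Hl. lia.
Qed.

Lemma corners_CR : corners alpha <= #|CR|.
Proof.
rewrite /corners.
rewrite -(card_in_imset (f := fun p : cell alpha => p.1)); last first.
  move=> p q; rewrite !unfold_in /= => /and4P[Hp1 Hp2 Hp3 _] /and4P[Hq1 Hq2 Hq3 _] E.
  apply: cell_eq; first by rewrite E.
  by rewrite (corner_col Hp1 Hp2 Hp3) (corner_col Hq1 Hq2 Hq3) E.
apply: subset_leq_card; apply/subsetP => r /imsetP [p].
rewrite unfold_in /= => /and4P[Hp1 Hp2 Hp3 Hp4] ->.
rewrite inE /good Hp2 /=.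
have Hl : p.1 < l by move: Hp1; rewrite /inD => /andP[/andP[]].
rewrite Hl /=. apply/negPn/negP => /norP[Ha Hn].
have Hl' : (p.1).+1 < l by rewrite ltn_neqAle Hn Hl.
have Ea : a p.1 = 1 by apply/eqP; rewrite eqn_leq leqNgt Ha andTb; exact: (apos Hc Hl).
move/negP: Hp4; apply.
rewrite (corner_col Hp1 Hp2 Hp3) /bcol Ea /= addn0.
exact: inD_below.
Qed.

Lemma CR_IR : 0 < l -> #|CR| <= #|IR| + 1.
Proof.
move=> Hl0.
have sl := size_sumn Hc.
apply: leq_trans (_ : #|(inord l.-1 : 'I_(gsz alpha)) |: IR| <= _).
  apply: subset_leq_card; apply/subsetP => r; rewrite !inE => Hg.
  rewrite Hg /=. case: (ltnP r.+1 l) => H; first by rewrite orbT.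
  apply/orP; left; apply/eqP; apply: val_inj; rewrite /= inordK; last by rewrite /gsz; lia.
  move: Hg; rewrite /good => /and3P[_ H2 _]. lia.
by rewrite cardsU1 addnC leq_add2l leq_b1.
Qed.
End Corners.

Lemma Fill_eq_code alpha (Hc : is_composition alpha) m i s x y i' s' x' y' r j :
  inD alpha r j -> Fill alpha m i s x y = Fill alpha m i' s' x' y' ->
  codeN alpha i s x y r j = codeN alpha i' s' x' y' r j.
Proof.
move=> H E. have [g1 g2] := inD_grid Hc H.
have := congr1 (fun T : filling alpha (size [:: m; 1]) => T (mkcell alpha r j)) E.
rewrite !ffunE /= !inordK // H => -[] /(congr1 val) /=.
by rewrite !inordK // ltnS code_le.
Qed.

Section Lower.
Variable alpha : seq nat.
Hypothesis Hc : is_composition alpha.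
Hypothesis Hl0 : 0 < size alpha.
Local Notation l := (size alpha).
Local Notation n := (sumn alpha).
Local Notation g := (gsz alpha).

Definition PT := ((('I_g * bool) * bool) * bool)%type.
Definition Phi (t : PT) := Fill alpha n.-1 t.1.1.1 t.1.1.2 t.1.2 t.2.
Definition S1 : {set PT} := setX (setX (setX (CR alpha) [set: bool]) [set: bool]) [set false].
Definition S2 : {set PT} := setX (setX (setX (IR alpha) [set: bool]) [set: bool]) [set true].

Lemma cardS : #|S1 :|: S2| = 4 * #|CR alpha| + 4 * #|IR alpha|.
Proof.
have := cardsUI S1 S2.
have -> : S1 :&: S2 = set0.
  apply/setP => t; rewrite !inE. by case: t.2; rewrite ?andbF.
rewrite cards0 addn0 => ->. rewrite !cardsX !cardsT card_bool !cards1. lia.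
Qed.

Lemma memS (t : PT) : t \in S1 :|: S2 -> good alpha t.1.1.1 /\ (t.2 -> (t.1.1.1 : nat).+1 < l).
Proof.
rewrite !inE !andbT. case: t.2; rewrite ?orbF ?andbF ?orbF /=; [by case/andP => /andP[-> ->] | by case/andP => ->].
Qed.

Lemma Phi_inj : {in S1 :|: S2 &, injective Phi}.
Proof.
move=> [[[i s] x] y] [[[i' s'] x'] y'] /memS /= [Hg Hy] /memS /= [Hg' Hy'] E.
rewrite /Phi /= in E.
have Hb := bb_in Hc Hg.
have Eb := Fill_eq_code Hc Hb E.
have Eb' : 2 <= codeN alpha i' s' x' y' i (bcol alpha i).
  by rewrite -Eb /codeN !eqxx.
move: Eb'; rewrite code_ge2 => /andP[/eqP Eii _].
have Ei : i = i' by apply: val_inj.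
subst i'.
move: Eb; rewrite /codeN !eqxx /= => [= Es].
have Ess : s' = s by rewrite -(oddb s) -(oddb s'); congr odd; lia.
subst s'.
have [i0 il _] := igood Hg.
have Hx : inD alpha (i : nat).-1 (lcol alpha (i : nat).-1) by apply: inD_left; lia.
have := Fill_eq_code Hc Hx E.
rewrite /codeN ltnn (prednK i0) eqxx.
have -> : ((i : nat).-1 == i) = false by lia.
rewrite /= => Ex.
have Exx : x' = x by rewrite -(oddb x) -(oddb x'); congr odd; lia.
subst x'.
suff Eyy : y' = y by subst y'.
case: (boolP (y || y')) => Hyy; last first.
  by move: Hyy; rewrite negb_or => /andP[/negbTE -> /negbTE ->].
have Hil : (i : nat).+1 < l by case/orP: Hyy => [/Hy|/Hy'].
have Hz : inD alpha l.-1 (lcol alpha l.-1) by apply: inD_left; lia.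
have := Fill_eq_code Hc Hz E.
rewrite /codeN ltnn (prednK Hl0) eqxx.
have -> : (l.-1 == i) = false by lia.
have -> : (l == i) = false by lia.
rewrite /= => Ey.
by rewrite -(oddb y) -(oddb y'); congr odd; lia.
Qed.
End Lower.

Lemma lower alpha : is_composition alpha -> 0 < size alpha ->
  4 * #|CR alpha| + 4 * #|IR alpha| <= rD_coef alpha [:: (sumn alpha).-1; 1].
Proof.
move=> Hc Hl0. rewrite -(cardS Hc Hl0) -(card_in_imset (Phi_inj Hc Hl0)).
apply: subset_leq_card; apply/subsetP => T /imsetP[t Ht ->].
rewrite unfold_in /= /Phi. have [Hg _] := memS Ht.
apply/andP; split; first exact: (Fill_valid Hc _ _ _ _ Hg).
exact: (Fill_content Hc _ _ _ Hg _).
Qed.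

From mathcomp Require Import lra.
Unset Implicit Arguments.
Set Strict Implicit.

Theorem mainTheorem15 (alpha : seq nat) :
  is_composition alpha ->
  nth 0 alpha 0 = 1 ->
  ((1 / 2 + (sumn alpha)%:R / 4 : rat) < (corners alpha)%:R)%R ->
  ~ p_positive (rD_coef alpha).
Proof.
move=> Hc H1 Hlt [Ls [c [HL [Hc0 Heq]]]].
have Hl0 : 0 < size alpha by case: (ltnP 0 (size alpha)) => // /(nth_default 0); rewrite H1.
have Hn : 0 < sumn alpha by have := size_sumn Hc; lia.
have U := upper Hc (sumn alpha) Hl0.
have Lo := lower Hc Hl0.
have C1 := corners_CR Hc.
have C2 := CR_IR Hc Hl0.
have K : rD_coef alpha [:: (sumn alpha).-1; 1] <= sumn alpha * rD_coef alpha [:: sumn alpha].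
  rewrite -(ler_nat rat) natrM !Heq mulr_sumr big_seq [X in (_ <= X)%R]big_seq.
  apply: ler_sum => l Hl.
  rewrite mulrCA; apply: ler_wpM2l; first exact: Hc0.
  rewrite -natrM ler_nat. apply: psum_bound => //.
  by move/allP: HL; apply.
have K2 : 4 * corners alpha <= sumn alpha + 2.
  have := leq_mul (leqnn (sumn alpha)) U. lia.
have : ((sumn alpha + 2)%:R < (4 * corners alpha)%:R :> rat)%R.
  rewrite natrD natrM. lra.
rewrite ltr_nat. lia.
Qed.
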